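(* Let $\varepsilon\in(0,\tfrac12)$. Let $G$ and $H$ be bipartite graphs, both with vertex classes $Z$ and $W$, where $|Z|=z$, $|W|=n$, and $z>\tfrac{2}{\varepsilon}$. Suppose that (1) $d_G(x)>\left(\tfrac12+\varepsilon\right)n$ for all $x\in Z$; (2) $d_G(y)>\left(\tfrac12+\tfrac{\varepsilon}{2}\right)z$ for all $y\in W$; (3) there is an $M\in\mathbb{N}$ and a $\delta\le\tfrac{\varepsilon}{10}$ such that $M\le d_H(x)\le M(1+\delta)$ for all $x\in Z$; (4) $d_H(y)=1$ for all $y\in W$. Then $H$ can be embedded into $G$, i.e. $G$ contains a subgraph isomorphic to $H$ via an isomorphism mapping $Z$ onto $Z$ and $W$ onto $W$.
   Context: All graphs are simple. $d_G(v)$ denotes the degree of vertex $v$ in graph $G$. *)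

(* Defs.v *)
From HB Require Import structures.
From mathcomp Require Import all_boot all_order all_algebra perm.
Set Implicit Arguments. Unset Strict Implicit. Unset Printing Implicit Defensive.

Definition bigraph (Z W : finType) := Z -> W -> bool.

Definition degZ (Z W : finType) (B : bigraph Z W) (x : Z) : nat := #|[set y | B x y]|.
Definition degW (Z W : finType) (B : bigraph Z W) (y : W) : nat := #|[set x | B x y]|.

Definition embeds (Z W : finType) (H G : bigraph Z W) : Prop :=
  exists (f : {perm Z}) (g : {perm W}), forall x y, H x y -> G (f x) (g y).

(* Main.v *)
Require Import Defs.
From HB Require Import structures.
From mathcomp Require Import all_boot all_order all_algebra perm.
From mathcomp Require Import zify lra.
Import Order.TTheory GRing.Theory Num.Theory.

Lemma cardU_le (T : finType) (X Y : {set T}) : #|X :|: Y| <= #|X| + #|Y|.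
Proof. rewrite cardsU; exact: leq_subr. Qed.

Section Hall.
Variables (L R : finType) (r : L -> R -> bool) (d : L -> R).
Definition nb (B : {set L}) : {set R} := [set y | [exists x in B, r x y]].


Lemma hall_ind n : forall (A : {set L}) (S : {set R}), #|A| <= n ->
  (forall B : {set L}, B \subset A -> #|B| <= #|nb B :&: S|) ->
  exists g : L -> R, (forall x, x \in A -> r x (g x) && (g x \in S))
    /\ {in A &, injective g}.
Proof.
elim: n => [|n IH] A S hA hH.
  exists d; move: hA; rewrite leqn0 cards_eq0 => /eqP->.
  by split => [x|x y]; rewrite inE.
case: (set_0Vmem A) => [->|[a aA]].
  by exists d; split => [x|x y]; rewrite inE.
have hA' : #|A :\ a| <= n by move: hA; rewrite (cardsD1 a A) aA.
case: (boolP [exists B : {set L},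
   [&& B \subset A :\ a, B != set0 & #|nb B :&: S| <= #|B|]]).
  case/existsP => B /and3P [sBA' nB0 tight].
  have sBA : B \subset A := subset_trans sBA' (subD1set A a).
  have [g1 [h1 i1]] := IH B S (leq_trans (subset_leq_card sBA') hA')
     (fun C sCB => hH C (subset_trans sCB sBA)).
  have hA2 : #|A :\: B| <= n.
    rewrite cardsD (setIidPr sBA).
    move: nB0; rewrite -card_gt0 => nB0; lia.
  have hH2 : forall C : {set L}, C \subset A :\: B -> #|C| <= #|nb C :&: (S :\: nb B)|.
    move=> C sC.
    have sCA : C \subset A := subset_trans sC (subsetDl A B).
    have := hH (C :|: B); rewrite subUset sCA sBA => /(_ isT) hCB.
    have CB0 : C :&: B = set0.
      apply/setP => x; rewrite !inE; case xC: (x \in C) => //=.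
      by have := subsetP sC x xC; rewrite inE => /andP[/negbTE -> _].
    have e1 : #|C :|: B| = #|C| + #|B| by rewrite cardsU CB0 cards0 subn0.
    have s2 : nb (C :|: B) :&: S \subset (nb C :&: (S :\: nb B)) :|: (nb B :&: S).
      apply/subsetP => w; rewrite /nb !inE => /andP[/existsP[y /andP[yCB ryw]] wS].
      case wB: [exists x in B, r x w]; rewrite /= ?wS ?andbF ?andbT ?orbT ?orbF //.
      move: yCB; rewrite inE => /orP[yC|yB]; first by apply/existsP; exists y; rewrite yC.
      by move/negbT: wB => /existsPn/(_ y); rewrite yB ryw.
    have := leq_trans (subset_leq_card s2) (@cardU_le _ _ _).
    lia.
  have [g2 [h2 i2]] := IH (A :\: B) (S :\: nb B) hA2 hH2.
  exists (fun x => if x \in B then g1 x else g2 x); split.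
    move=> x xA; case: ifP => xB; first exact: h1.
    by have := h2 x; rewrite !inE xB xA => /(_ isT) /and3P[-> _ ->].
  have nbB : forall x, x \in B -> g1 x \in nb B.
    move=> x xB; rewrite /nb inE; apply/existsP; exists x.
    by have := h1 x xB; rewrite xB => /andP[-> _].
  have nnbB : forall x, x \in A -> x \notin B -> g2 x \notin nb B.
    by move=> x xA xB; have := h2 x; rewrite !inE xB xA => /(_ isT) /and3P[_ ->].
  move=> x y xA yA /=; case: ifP => xB; case: ifP => yB.
  - exact: i1.
  - by move=> e; move: (nnbB y yA (negbT yB)); rewrite -e nbB.
  - by move=> e; move: (nnbB x xA (negbT xB)); rewrite e nbB.
  - by apply: i2; rewrite inE ?xB ?yB ?xA ?yA.
move/existsPn => nt.
have := hH [set a]; rewrite sub1set aA cards1 => /(_ isT).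
rewrite card_gt0 => /set0Pn [b]; rewrite /nb !inE => /andP[/existsP[a' /andP[]]].
rewrite inE => /eqP -> rab bS.
have hH2 : forall C : {set L}, C \subset A :\ a -> #|C| <= #|nb C :&: (S :\ b)|.
  move=> C sC; case: (set_0Vmem C) => [->|[c cC]]; first by rewrite cards0.
  have C0 : C != set0 by apply/set0Pn; exists c.
  have := nt C; rewrite sC C0 /= -ltnNge => lt.
  have s2 : nb C :&: S \subset (nb C :&: (S :\ b)) :|: [set b].
    apply/subsetP => w; rewrite !inE => /andP[-> ->]; rewrite andbT.
    by case: (w == b); rewrite ?orbT.
  have := leq_trans (subset_leq_card s2) (@cardU_le _ _ _).
  rewrite cards1; lia.
have [g2 [h2 i2]] := IH (A :\ a) (S :\ b) hA' hH2.
have g2S : forall x, x \in A -> x != a -> [&& g2 x != b, g2 x \in S & r x (g2 x)].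
  by move=> x xA xa; have := h2 x; rewrite !inE xA xa => /(_ isT) /and3P[-> -> ->].
exists (fun x => if x == a then b else g2 x); split.
  move=> x xA; case: ifP => [/eqP->|/negbT xa]; first by rewrite rab bS.
  by case/and3P: (g2S x xA xa) => _ -> ->.
move=> x y xA yA /=; case: ifP => [/eqP->|/negbT xa]; case: ifP => [/eqP->|/negbT ya] //.
- by move=> e; have := g2S y yA ya; rewrite -e eqxx.
- by move=> e; have := g2S x xA xa; rewrite e eqxx.
- by apply: i2; rewrite !inE ?xa ?ya ?xA ?yA.
Qed.

Lemma hall : (forall B : {set L}, #|B| <= #|nb B|) ->
  exists g : L -> R, (forall x, r x (g x)) /\ injective g.
Proof.
move=> hH; have [|g [h i]] := @hall_ind #|L| setT setT (max_card _).
  by move=> B _; rewrite setIT.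
exists g; split; first by move=> x; have := h x; rewrite inE => /(_ isT) /andP[].
by move=> x y; apply: i; rewrite inE.
Qed.
End Hall.

Lemma card_setE (T : finType) (P : pred T) : #|[set y | P y]| = \sum_y (P y : nat).
Proof.
rewrite cardsE -sum1_card big_mkcond /=; apply: eq_bigr => i _. by rewrite unfold_in; case: (P i).
Qed.

Local Open Scope ring_scope.

Theorem lemma2 (R : realFieldType) (Z W : finType) (G H : bigraph Z W)
  (eps : R) (M : nat) (delta : R) :
  0 < eps -> eps < 1 / 2 ->
  2 / eps < #|Z|%:R ->
  (forall x : Z, (1 / 2 + eps) * #|W|%:R < (degZ G x)%:R) ->
  (forall y : W, (1 / 2 + eps / 2) * #|Z|%:R < (degW G y)%:R) ->
  delta <= eps / 10 ->
  (forall x : Z, (M <= degZ H x)%N /\ (degZ H x)%:R <= M%:R * (1 + delta)) ->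
  (forall y : W, degW H y = 1%N) ->
  embeds H G.
Proof.
move=> e0 _ _ hGZ hGW hd hM hHW.
have huniq : forall x x' y, H x y -> H x' y -> x = x'.
  move=> x x' y hx hx'; have := hHW y; rewrite /degW => /eqP/cards1P[x0 e].
  have : x \in [set x | H x y] by rewrite inE.
  have : x' \in [set x | H x y] by rewrite inE.
  by rewrite e !inE => /eqP-> /eqP->.
have hsum1 : forall y, (\sum_x (H x y : nat) = 1)%N.
  by move=> y; rewrite -card_setE; exact: hHW.
pose r := fun (y w : W) => [exists x, H x y && G x w].
have hallc : forall B : {set W}, (#|B| <= #|@nb W W r B|)%N.
  move=> B.
  pose A := [set x | [exists y in B, H x y]].
  have hB : (#|B| <= \sum_(x in A) degZ H x)%N.
    rewrite -sum1_card.
    rewrite (eq_bigr (fun y => \sum_x (H x y : nat))%N); last by move=> y _; rewrite hsum1.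
    rewrite exchange_big /=.
    rewrite [X in (X <= _)%N](bigID (fun x => x \in A)) /=.
    rewrite [X in (_ + X <= _)%N]big1 ?addn0; last first.
      move=> x xA; apply: big1 => y yB; apply/eqP; rewrite eqb0; apply/negP => hxy.
      by move: xA; rewrite inE => /existsPn/(_ y); rewrite yB hxy.
    apply: leq_sum => x _; rewrite /degZ card_setE.
    rewrite [X in (_ <= X)%N](bigID (fun y => y \in B)) /=; exact: leq_addr.
  have nbI : forall x w, x \in A -> G x w -> w \in @nb W W r B.
    move=> x w; rewrite inE => /existsP[y /andP[yB hxy]] gxw.
    rewrite /nb inE; apply/existsP; exists y; rewrite yB /=.
    by apply/existsP; exists x; rewrite hxy gxw.
  case: (set_0Vmem A) => [A0 | [x0 x0A]].
    by move: hB; rewrite A0 big_set0 leqn0 => /eqP->.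
  have hc : (degZ G x0 <= #|@nb W W r B|)%N.
    apply: subset_leq_card; apply/subsetP => w; rewrite inE; exact: nbI.
  case: (leqP (2 * #|A|) #|Z|) => hA.
    have hx : forall x, (degZ H x)%:R <= M%:R * (1 + eps / 10) :> R.
      move=> x; case: (hM x) => _ h; apply: (le_trans h).
      by apply: ler_wpM2l; [exact: ler0n | rewrite lerD2l].
    have h1 : #|B|%:R <= #|A|%:R * (M%:R * (1 + eps / 10)) :> R.
      apply: (le_trans (y := (\sum_(x in A) degZ H x)%:R)); first by rewrite ler_nat.
      rewrite natr_sum; apply: le_trans (ler_sum _ (fun x _ => hx x)) _.
      by rewrite sumr_const [X in _ <= X]mulr_natl.
    have h2 : (#|Z| * M <= #|W|)%N.
      have -> : #|W| = (\sum_x degZ H x)%N.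
        rewrite -sum1_card (eq_bigr (fun y => \sum_x (H x y : nat))%N); last by move=> y _; rewrite hsum1.
        rewrite exchange_big /=; apply: eq_bigr => x _; by rewrite /degZ card_setE.
      rewrite -sum_nat_const; apply: leq_sum => x _; by case: (hM x).
    have h2R : #|Z|%:R * M%:R <= #|W|%:R :> R by rewrite -natrM ler_nat.
    have hAR : 2 * #|A|%:R <= #|Z|%:R :> R by rewrite -(ler_nat R) natrM in hA.
    have hcR : (degZ G x0)%:R <= #|@nb W W r B|%:R :> R by rewrite ler_nat.
    have hG0 := hGZ x0.
    rewrite -(ler_nat R).
    set c := M%:R * (1 + eps / 10) in h1 hx.
    have c0 : 0 <= c by rewrite /c; apply: mulr_ge0; [exact: ler0n | lra].
    have t1 : 2 * #|A|%:R * c <= #|Z|%:R * c by apply: ler_wpM2r.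
    have t2 : #|Z|%:R * c <= #|W|%:R * (1 + eps / 10).
      rewrite /c mulrA; apply: ler_wpM2r => //; lra.
    have n0 : 0 <= #|W|%:R :> R by exact: ler0n.
    nra.
  have all : forall w, w \in @nb W W r B.
    move=> w.
    have hw : (#|Z| < 2 * degW G w)%N.
      rewrite -(ltr_nat R) natrM; have := hGW w; have := ler0n R #|Z|; nra.
    case: (set_0Vmem (A :&: [set x | G x w])) => [I0 | [x]].
      have := cardsU A [set x | G x w]; rewrite I0 cards0 subn0 => e.
      have := max_card (A :|: [set x | G x w]); rewrite e; rewrite /degW in hw; lia.
    by rewrite in_setI => /andP[xA]; rewrite inE => gxw; exact: nbI x w xA gxw.
  apply: (leq_trans (max_card B)); rewrite -cardsT; apply: subset_leq_card.
  by apply/subsetP => w _; exact: all w.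
have [g [hg ig]] := @hall _ _ r id hallc.
exists 1%g, (perm ig) => x y hxy; rewrite perm1 permE.
have /existsP[x' /andP[hx' gx']] := hg y.
by rewrite (huniq x x' y hxy hx').
Qed.
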